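(* Let $G=AB$ be a finite $\pi$-separable group that is the product of subgroups $A$ and $B$. Then $|x^G|$ is a $\pi'$-number for each $\pi$-element $x\in A\cup B$ of prime power order if and only if the Hall $\pi$-subgroups of $G$ are abelian. Moreover, if this occurs, then the $\pi$-length of $G$ is at most $1$.
   Context: $\pi$ is a set of primes, $\pi'$ its complement; a $\pi'$-number is a positive integer with no prime divisor in $\pi$; $|x^G|=|G:C_G(x)|$. *)

(* Defs.v *)
From mathcomp Require Import all_boot all_fingroup all_solvable.
Set Implicit Arguments. Unset Strict Implicit. Unset Printing Implicit Defensive.
Local Open Scope group_scope.

Definition pi_separable (pi : nat_pred) (gT : finGroupType) (G : {group gT}) : Prop :=
  exists s : seq {group gT},
    [/\ all (fun H : {group gT} => H <| G) s,
        path (fun H K : {group gT} =>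
                (H <| K) && (pi.-group (K / H) || pi^'.-group (K / H)))
             1%G s
      & last 1%G s = G].

(* The upper pi-series  1 <= O_pi'(G) <= O_{pi',pi}(G) <= O_{pi',pi,pi'}(G) <= ...
   with n pi-steps is 'O_{pi', pi, pi', ..., pi, pi'}(G) (n occurrences of pi). *)
Definition upper_pi_preds (pi : nat_pred) (n : nat) : seq nat_pred :=
  pi^' :: flatten (nseq n [:: (pi : nat_pred); pi^']).

Definition pi_length_le (pi : nat_pred) (n : nat) (gT : finGroupType) (G : {group gT}) : Prop :=
  pseries (upper_pi_preds pi n) G = G.

(* Main.v *)
Require Import Defs.
From mathcomp Require Import all_boot all_fingroup all_solvable.
Set Implicit Arguments. Unset Strict Implicit. Unset Printing Implicit Defensive.
Local Open Scope group_scope.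

Definition sepP (pi : nat_pred) (gT : finGroupType) (G : {group gT}) :=
  exists n, pseries (upper_pi_preds pi n) G = G.

Lemma upper_S pi n :
  upper_pi_preds pi n.+1 = rcons (rcons (upper_pi_preds pi n) pi) pi^'.
Proof.
rewrite /upper_pi_preds -!cats1 /= -catA; congr (_ :: _).
elim: n => //= n IH; by rewrite IH.
Qed.

Lemma upper_S' pi n :
  upper_pi_preds pi n.+1 = pi^' :: pi :: upper_pi_preds pi n.
Proof. by []. Qed.

Lemma step_sub (gT : finGroupType) (G X Y : {group gT}) (L : seq nat_pred) rho :
  X \subset pseries L G -> Y <| G -> X <| Y -> rho.-group (Y / X) ->
  Y \subset pseries (rcons L rho) G.
Proof.
move=> sXS nsYG nsXY rY.
have nSG := pseries_normal L G.
rewrite pseries_rcons /pcore_mod -sub_morphim_pre; last first.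
  exact: subset_trans (normal_sub nsYG) (normal_norm nSG).
apply: pcore_max; last exact: quotient_normal.
have nSY : Y \subset 'N(pseries L G) :=
  subset_trans (normal_sub nsYG) (normal_norm nSG).
rewrite /pgroup card_quotient // -indexgI.
apply: pnat_dvd rY; rewrite card_quotient ?normal_norm //.
by apply: indexgS; rewrite subsetI normal_sub.
Qed.

Lemma upper_mono pi (gT : finGroupType) (G : {group gT}) k :
  pseries (upper_pi_preds pi k) G \subset pseries (upper_pi_preds pi k.+1) G.
Proof. by rewrite upper_S -!cats1 -catA pseries_sub_catl. Qed.

Lemma sep_bridge pi (gT : finGroupType) (G : {group gT}) :
  pi_separable pi G -> sepP pi G.
Proof.
case=> s [/allP nsG pth lastG]; exists (size s).
apply/eqP; rewrite eqEsubset pseries_sub /=.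
suff : forall (X : {group gT}) k, X <| G -> X \subset pseries (upper_pi_preds pi k) G ->
   forall s, {subset s <= [pred H : {group gT} | H <| G]} ->
   path (fun H K : {group gT} =>
                (H <| K) && (pi.-group (K / H) || pi^'.-group (K / H))) X s ->
   last X s \subset pseries (upper_pi_preds pi (k + size s)) G.
  move=> /(_ 1%G 0 (normal1 G) (sub1G _) s nsG pth); by rewrite lastG.
move=> X k nsXG sXS s'; elim: s' X k nsXG sXS => [|Y s' IH] X k nsXG sXS sub' /=.
  by rewrite addn0.
case/andP=> /andP[nsXY rY] pth'.
have nsYG : Y <| G by apply: sub'; rewrite inE eqxx.
rewrite addnS -addSn; apply: IH => //; last first.
  by move=> H Hs; apply: sub'; rewrite inE Hs orbT.
rewrite upper_S; case/orP: rY => rY.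
  rewrite -[rcons (rcons _ pi) _]cats1.
  apply: subset_trans (pseries_sub_catl _ _ _); exact: step_sub rY.
apply: step_sub rY => //.
apply: subset_trans sXS _; rewrite -cats1; exact: pseries_sub_catl.
Qed.

Lemma sep_morphim pi (gT rT : finGroupType) (D G : {group gT})
   (f : {morphism D >-> rT}) : sepP pi G -> sepP pi (f @* G)%G.
Proof.
case=> n Gn; exists n; apply/eqP; rewrite eqEsubset pseries_sub /=.
have := pmorphimF (pseries_pgFun (upper_pi_preds pi n)) G f.
by rewrite /= Gn.
Qed.

Lemma sep_sub pi (gT : finGroupType) (G H : {group gT}) :
  H \subset G -> sepP pi G -> sepP pi H.
Proof.
move=> sHG [n Gn]; exists n; apply/eqP; rewrite eqEsubset pseries_sub /=.
have := gFhereditary (pseries_pgFun (upper_pi_preds pi n)) sHG.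
by rewrite /= Gn (setIidPr sHG).
Qed.

Lemma sep_triv pi (gT : finGroupType) (G : {group gT}) :
  sepP pi G -> 'O_pi(G) = 1 -> 'O_pi^'(G) = 1 -> G :=: 1.
Proof.
case=> n Gn O1 O1'; rewrite -Gn {Gn}; elim: n => [|n IH].
  by rewrite /upper_pi_preds /= pseries1.
by rewrite upper_S' pseries_pop // pseries_pop.
Qed.

Lemma HH pi (gT : finGroupType) (G : {group gT}) :
  sepP pi G -> 'O_pi^'(G) = 1 -> 'C_G('O_pi(G)) \subset 'O_pi(G).
Proof.
move=> sepG O1'.
set M := 'O_pi(G).
have nsMG : M <| G := pcore_normal _ _.
set D := 'C_G(M)%G.
have nsDG : D <| G.
  by have := subcent_normal G M; rewrite (setIidPl (normal_norm nsMG)).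
set Z := 'O_pi(D)%G.
have defZ : M :&: D = Z by rewrite /Z /= -(pcore_setI_normal pi nsDG).
have sZM : Z \subset M by rewrite -defZ subsetIl.
have cZD : D \subset 'C(Z).
  by apply: subset_trans (centS sZM); rewrite subsetIr.
set W := 'O_{pi, pi^'}(D)%G.
have nsWG : W <| G := char_normal_trans (pseries_char _ _) nsDG.
have sWD : W \subset D := pseries_sub _ _.
have sZW : Z \subset W.
  by have := pseries_sub_catl [:: pi] [:: pi^'] D; rewrite pseries1.
have nZD : D \subset 'N(Z) := gFnorm _ _.
have WZ : W / Z = 'O_pi^'(D / Z).
  by rewrite /W -quotient_pseries2.
have nsZW : Z <| W by rewrite /normal sZW (subset_trans sWD nZD).
have hallZ : Hall W Z.
  rewrite /Hall sZW /= -card_quotient ?normal_norm // WZ.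
  exact: pnat_coprime (pcore_pgroup _ _) (pcore_pgroup _ _).
have [L /complP [tiZL defW]] := splitsP (SchurZassenhaus_split hallZ nsZW).
have WZL : W :=: Z * L by rewrite defW.
have sLW : L \subset W by rewrite WZL mulG_subr.
have nLW : W \subset 'N(L).
  rewrite WZL mul_subG ?normG //.
  apply: subset_trans (cent_sub L).
  by rewrite centsC (subset_trans (subset_trans sLW sWD)).
have pL : pi^'.-group L.
  have e := TI_cardMg tiZL; rewrite defW in e.
  have : (#|Z| * #|L| = #|Z| * #|W : Z|)%N by rewrite -e Lagrange.
  move/eqP; rewrite eqn_pmul2l ?cardG_gt0 // /pgroup => /eqP ->.
  by have := pcore_pgroup pi^' (D / Z); rewrite -WZ /pgroup card_quotient ?normal_norm.
have L1 : L :=: 1.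
  apply/trivgP; rewrite -O1'.
  apply: subset_trans (_ : 'O_pi^'(W) \subset _).
    by apply: pcore_max pL _; rewrite /normal sLW.
  by rewrite -(pcore_setI_normal _ nsWG) subsetIl.
have WZe : W :=: Z by rewrite WZL L1 mulg1.
have sepD : sepP pi D := sep_sub (normal_sub nsDG) sepG.
have sepDZ := sep_morphim (coset Z) sepD.
have := sep_triv sepDZ (trivg_pcore_quotient _ _).
rewrite /= -WZ WZe trivg_quotient => /(_ erefl) /eqP.
rewrite -subG1 quotient_sub1 // => sDZ.
exact: subset_trans sDZ sZM.
Qed.

Lemma pre_facts (gT : finGroupType) (G N : {group gT}) (Kb : {group coset_of N}) :
  N <| G -> Kb \subset G / N ->
  (coset N @*^-1 Kb \subset G) /\ #|coset N @*^-1 Kb| = (#|N| * #|Kb|)%N.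
Proof.
move=> nsNG sKG; have [sNG nNG] := andP nsNG; split.
  apply: subset_trans (morphpreS _ sKG) _.
  by rewrite quotientK // mulSGid.
rewrite card_morphpre ?ker_coset //.
by apply: subset_trans sKG _; rewrite /quotient morphimS.
Qed.

Lemma partG (gT : finGroupType) (G N : {group gT}) pi :
  N <| G -> (#|G|`_pi = #|G / N|`_pi * #|N|`_pi)%N.
Proof.
move=> nsNG; rewrite -partnM ?cardG_gt0 // card_quotient ?normal_norm //.
by rewrite mulnC Lagrange ?normal_sub.
Qed.

Lemma hall_exists pi (gT : finGroupType) (G : {group gT}) :
  sepP pi G -> exists H : {group gT}, pi.-Hall(G) H.
Proof.
have [n] := ubnP #|G|; elim: n gT G => // n IH gT G /ltnSE leGn sepG.
have [O1'|ntN] := eqVneq 'O_pi^'(G) 1.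
  have [O1|ntM] := eqVneq 'O_pi(G) 1.
    have G1 := sep_triv sepG O1 O1'.
    by exists 1%G; rewrite pHallE sub1G G1 cards1 partn1.
  have nsMG : 'O_pi(G) <| G := pcore_normal _ _.
  have ltG : #|G / 'O_pi(G)| < n.
    by apply: leq_trans leGn; rewrite ltn_quotient ?pcore_sub.
  have [Kb hallK] := IH _ _ ltG (sep_morphim _ sepG).
  have [sKG cardK] := pre_facts nsMG (pHall_sub hallK).
  exists (coset 'O_pi(G) @*^-1 Kb)%G; rewrite pHallE sKG /= cardK.
  by rewrite (partG _ nsMG) -(card_Hall hallK) (part_pnat_id (pcore_pgroup _ _)) mulnC.
have nsNG : 'O_pi^'(G) <| G := pcore_normal _ _.
have ltG : #|G / 'O_pi^'(G)| < n.
  by apply: leq_trans leGn; rewrite ltn_quotient ?pcore_sub.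
have [Kb hallK] := IH _ _ ltG (sep_morphim _ sepG).
have [sKG cardK] := pre_facts nsNG (pHall_sub hallK).
set K := (coset 'O_pi^'(G) @*^-1 Kb)%G in sKG cardK.
have sNK : 'O_pi^'(G) \subset K by rewrite sub_cosetpre.
have nsNK : 'O_pi^'(G) <| K.
  by rewrite /normal sNK (subset_trans sKG) ?normal_norm.
have iKN : #|K : 'O_pi^'(G)| = #|Kb|.
  apply/eqP; rewrite -(eqn_pmul2l (cardG_gt0 'O_pi^'(G))) Lagrange //.
  by rewrite cardK.
have hallN : Hall K 'O_pi^'(G).
  rewrite /Hall sNK iKN /=.
  by rewrite coprime_sym; exact: pnat_coprime (pHall_pgroup hallK) (pcore_pgroup _ _).
have [L /complP [tiNL defK]] := splitsP (SchurZassenhaus_split hallN nsNK).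
have cardL : #|L| = #|Kb|.
  have e := TI_cardMg tiNL; rewrite defK cardK in e.
  by apply/eqP; rewrite -(eqn_pmul2l (cardG_gt0 'O_pi^'(G))) e.
exists L; rewrite pHallE (subset_trans _ sKG) /=; last by rewrite -defK mulG_subr.
by rewrite cardL (partG _ nsNG) -(card_Hall hallK) (part_p'nat (pcore_pgroup _ _)) muln1.
Qed.
Lemma len_crit pi (gT : finGroupType) (G : {group gT}) :
  pi^'.-group ((G / 'O_pi^'(G)) / 'O_pi(G / 'O_pi^'(G))) -> pi_length_le pi 1 G.
Proof.
move=> pGb.
set Gb := (G / 'O_pi^'(G))%G.
have e1 : 'O_{pi, pi^'}(Gb) = Gb.
  apply: (@quotient_inj _ 'O_pi(Gb)%G); rewrite ?pseries_normal ?pcore_normal //.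
    apply/andP; split; last exact: subset_trans (pseries_sub _ _) (gFnorm _ _).
    by have := pseries_sub_catl [:: pi] [:: pi^'] Gb; rewrite pseries1.
  by rewrite quotient_pseries2; apply: pcore_pgroup_id.
have := quotient_pseries_cat [:: pi^'] [:: pi; pi^'] G.
rewrite pseries1 -/Gb e1 => e2.
rewrite /pi_length_le.
apply: (@quotient_inj _ 'O_pi^'(G)%G); rewrite ?pcore_normal //.
  apply/andP; split; last exact: subset_trans (pseries_sub _ _) (gFnorm _ _).
  by have := pseries_sub_catl [:: pi^'] [:: pi; pi^'] G; rewrite pseries1.
Qed.

Lemma normal_pi_sub pi (gT : finGroupType) (X M C : {group gT}) :
  M <| X -> pi.-group M -> C \subset X -> pi^'.-nat #|X : C| -> M \subset C.
Proof.
move=> nsMX pM sCX pXC.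
have nMC : C \subset 'N(M) := subset_trans sCX (normal_norm nsMX).
have e : #|M : C| = 1%N.
  apply: (pnat_1 (pi := pi)).
    by apply: pnat_dvd (dvdn_indexg _ _) pM.
  apply: pnat_dvd pXC; rewrite -indexMg -norm_joinEl //.
  by apply: indexSg; rewrite ?joing_subl // join_subG sCX normal_sub.
have := index1g (subsetIl M C); rewrite indexgI => /(_ e) eMC.
by rewrite -eMC subsetIr.
Qed.

Lemma pi'_index pi (gT : finGroupType) (X Z : {group gT}) :
  (forall p, prime p -> p \in pi -> exists S : {group gT}, p.-Sylow(X) S /\ S \subset Z) ->
  pi^'.-nat #|X : Z|.
Proof.
move=> hS; apply/pnatP => // p pr_p dvp.
apply/negP => pip; have [S [sylS sSZ]] := hS p pr_p pip.
have [sSX _ pXS] := and3P sylS.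
have : p %| #|X : S|.
  apply: dvdn_trans dvp _; rewrite -indexgI; apply: indexgS.
  by rewrite subsetI sSX.
move/(pnat_dvd)/(_ pXS); rewrite pnatE // inE /= => /negP; apply.
by rewrite inE.
Qed.

Lemma prod_index pi (gT : finGroupType) (Gb X Y Z : {group gT}) :
  X * Y = Gb -> Z <| Gb -> pi^'.-nat #|X : Z| -> pi^'.-nat #|Y : Z| ->
  pi^'.-nat #|Gb : Z|.
Proof.
move=> eG nsZ pX pY.
have sXG : X \subset Gb by rewrite -eG mulG_subl.
have sYG : Y \subset Gb by rewrite -eG mulG_subr.
have nZG := normal_norm nsZ.
rewrite -card_quotient // -eG quotientMl ?(subset_trans sXG) //.
apply: pnat_dvd (_ : _ %| #|X / Z| * #|Y / Z|) _.
  by rewrite mul_cardG dvdn_mulr.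
by rewrite pnatM !card_quotient ?pX ?pY ?(subset_trans sXG) ?(subset_trans sYG).
Qed.

Lemma cls_quot pi (gT : finGroupType) (G N : {group gT}) x :
  N <| G -> x \in G -> pi^'.-nat #|x ^: G| ->
  pi^'.-nat #|G / N : 'C_(G / N)[coset N x]|.
Proof.
move=> nsNG Gx; rewrite -index_cent1; apply: pnat_dvd.
have nNG := normal_norm nsNG.
have nx : x \in 'N(N) := subsetP nNG x Gx.
apply: dvdn_trans (_ : _ %| #|G / N : 'C_G[x] / N|) _.
  apply: indexgS; rewrite subsetI quotientS ?subsetIl //=.
  exact: morphim_cent1s nx (subsetIr _ _).
apply: index_morphim; apply: subset_trans (subsetIl _ _) nNG.
Qed.

Theorem mainTheorem5 (pi : nat_pred) (gT : finGroupType) (G A B : {group gT}) :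
  A * B = G ->
  pi_separable pi G ->
  ((forall x, x \in A :|: B -> pi.-elt x ->
      (exists p e, prime p /\ #[x] = (p ^ e)%N) ->
      pi^'.-nat #|x ^: G|)
   <-> (forall H : {group gT}, pi.-Hall(G) H -> abelian H))
  /\ ((forall H : {group gT}, pi.-Hall(G) H -> abelian H) -> pi_length_le pi 1 G).
Proof.
move=> AB sepG0.
have sepG := sep_bridge sepG0.
have sAG : A \subset G by rewrite -AB mulG_subl.
have sBG : B \subset G by rewrite -AB mulG_subr.
have sABG : A :|: B \subset G by rewrite subUset sAG sBG.
set N := 'O_pi^'(G).
have nsNG : N <| G := pcore_normal _ _.
have nNG := normal_norm nsNG.
set Gb := (G / N)%G.
have sepGb : sepP pi Gb := sep_morphim _ sepG.
have O1b : 'O_pi^'(Gb) = 1 := trivg_pcore_quotient _ _.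
have HHb := HH sepGb O1b.
set M := 'O_pi(Gb).
have nsMG : M <| Gb := pcore_normal _ _.
have fromAb : (forall H : {group gT}, pi.-Hall(G) H -> abelian H) ->
   pi.-Hall(Gb) M /\ exists2 H : {group gT}, pi.-Hall(G) H & M :=: H / N.
  move=> allAb; have [H hH] := hall_exists sepG.
  have hHb : pi.-Hall(Gb) (H / N) := quotient_pHall (subset_trans (pHall_sub hH) nNG) hH.
  have sMH : M \subset H / N := pcore_sub_Hall hHb.
  have aHb : abelian (H / N) := quotient_abelian _ (allAb H hH).
  have sHM : H / N \subset M.
    apply: subset_trans HHb; rewrite subsetI (pHall_sub hHb) /=.
    exact: subset_trans aHb (centS sMH).
  have eM : M :=: H / N by apply/eqP; rewrite eqEsubset sMH sHM.
  by split; [rewrite eM | exists H].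
have lenM : pi.-Hall(Gb) M -> pi_length_le pi 1 G.
  move=> hM; apply: len_crit; have [_ _ pM] := and3P hM.
  by rewrite /pgroup card_quotient ?normal_norm.
split; last by move=> allAb; apply: lenM; case: (fromAb allAb).
split=> [hyp | allAb].
  have keyZ : forall x, x \in G -> pi^'.-nat #|x ^: G| -> coset N x \in 'Z(M).
    move=> x Gx px.
    have pC := cls_quot nsNG Gx px.
    have sMC := normal_pi_sub nsMG (pcore_pgroup _ _) (subsetIl _ _) pC.
    have xC : coset N x \in 'C(M).
      by rewrite -sub_cent1 (subset_trans sMC) ?subsetIr.
    have xM : coset N x \in M.
      apply: (subsetP HHb); rewrite inE xC andbT.
      exact: mem_quotient.
    by apply/setIP; split.
  have sylZ : forall C : {group gT}, C \subset G -> C \subset A :|: B ->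
      pi^'.-nat #|C / N : 'Z(M)|.
    move=> C sCG sCAB; apply: pi'_index => p pr_p pip.
    have [S sylS] := Sylow_exists p (C / N)%G.
    exists S; split => //; apply/subsetP => y Sy.
    have Cy : y \in C / N := subsetP (pHall_sub sylS) y Sy.
    have py : p.-elt y := mem_p_elt (pHall_pgroup sylS) Sy.
    case/morphimP: Cy => a Na Ca ey.
    set x := a.`_p.
    have Cx : x \in C by apply: groupX.
    have exy : coset N x = y by rewrite /x morph_constt // -ey constt_p_elt.
    rewrite -exy; apply: keyZ; first exact: subsetP sCG x Cx.
    apply: hyp; first exact: subsetP sCAB x Cx.
      exact: pi_pnat (p_elt_constt p a) pip.
    by have [k ek] := p_natP (p_elt_constt p a); exists p, k.
  have nsZ : 'Z(M) <| Gb.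
    exact: char_normal (char_trans (center_char _) (pcore_char _ _)).
  have hZ : pi^'.-nat #|Gb : 'Z(M)|.
    apply: (prod_index (X := (A / N)%G) (Y := (B / N)%G)) => //.
    - by rewrite -quotientMl ?(subset_trans sAG) // AB.
    - by apply: sylZ; rewrite ?sAG ?subsetUl.
    by apply: sylZ; rewrite ?sBG ?subsetUr.
  have hallZ : pi.-Hall(Gb) 'Z(M).
    rewrite /pHall hZ andbT (subset_trans (center_sub _) (pcore_sub _ _)) /=.
    exact: pgroupS (center_sub _) (pcore_pgroup _ _).
  move=> H hH.
  have nNH : H \subset 'N(N) := subset_trans (pHall_sub hH) nNG.
  have sHZ : H / N \subset 'Z(M).
    rewrite (sub_normal_Hall hallZ nsZ) ?quotientS ?(pHall_sub hH) //.
    exact: quotient_pgroup (pHall_pgroup hH).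
  have tiNH : N :&: H = 1.
    by apply: coprime_TIg; rewrite coprime_sym;
      exact: pnat_coprime (pHall_pgroup hH) (pcore_pgroup _ _).
  rewrite (isog_abelian (quotient_isog nNH tiNH)).
  exact: abelianS sHZ (center_abelian _).
move=> x ABx pix _.
have Gx : x \in G := subsetP sABG x ABx.
have [hM [H hH eM]] := fromAb allAb.
have nNx : x \in 'N(N) := subsetP nNG x Gx.
have nNH : H \subset 'N(N) := subset_trans (pHall_sub hH) nNG.
have xbM : coset N x \in M.
  by rewrite (mem_normal_Hall hM nsMG) ?mem_quotient // morph_p_elt.
have xNH : x \in N <*> H.
  rewrite norm_joinEr // -quotientK //; apply: mem_morphpre => //.
  by rewrite -eM.
set K := (N <*> <[x]>)%G.
have nNcx : <[x]> \subset 'N(N) by rewrite cycle_subG.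
have eK : K :=: N * <[x]> by rewrite /K /= norm_joinEr.
have sKNH : K \subset N <*> H.
  by rewrite join_subG joing_subl cycle_subG.
set B0 := (H :&: K)%G.
have eNB0 : N * B0 = K.
  rewrite /B0 /= group_modl ?joing_subl //.
  by rewrite -norm_joinEr // (setIidPr sKNH).
have tiNH : N :&: H = 1.
  by apply: coprime_TIg; rewrite coprime_sym;
    exact: pnat_coprime (pHall_pgroup hH) (pcore_pgroup _ _).
have tiNB0 : N :&: B0 = 1.
  by apply/trivgP; rewrite -tiNH setIS // subsetIl.
have copNx : coprime #|N| #|<[x]>|.
  by rewrite coprime_sym; exact: pnat_coprime pix (pcore_pgroup _ _).
have cardB0 : #|<[x]>| = #|B0|.
  have e1 := TI_cardMg tiNB0; have e2 := TI_cardMg (coprime_TIg copNx).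
  rewrite -eK -eNB0 e1 in e2; apply/eqP.
  by rewrite -(eqn_pmul2l (cardG_gt0 N)) e2.
have sB0 : B0 \subset <[x]> <*> N by rewrite joingC subsetIr.
have [y Ny eB0] := SchurZassenhaus_trans_actsol
   (abelian_sol (cycle_abelian x)) nNcx sB0 copNx cardB0.
have Gy : y \in G := subsetP (pcore_sub _ _) y Ny.
set H' := (H :^ y^-1)%G.
have hH' : pi.-Hall(G) H' by rewrite pHallJ ?groupV.
have xH' : x \in H'.
  rewrite /H' /= mem_conjgV; apply: (subsetP (subsetIl H K)).
  by rewrite -[H :&: K]/(gval B0) eB0 memJ_conjg cycle_id.
have sH'C : H' \subset 'C_G[x].
  rewrite subsetI (pHall_sub hH') sub_cent1.
  exact: subsetP (allAb H' hH') x xH'.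
rewrite -index_cent1; apply: pnat_dvd (indexgS _ sH'C) _.
by have [_ _ ] := and3P hH'.
Qed.
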